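(* Let $n\ge1$, $0<\tau_0\le\infty$, $\sigma\in J_n^+$, $\Lambda$ a continuous positive function, and let $V\ge0$ be continuous with $V(x,t)\ge\Lambda(t)|x|^\sigma$ for $|x|\ge1$, $0<t<\tau_0$. Then there are a non-increasing function $\eta:\mathbb{R}\to(0,\infty)$ and, for each $d\ge0$, a constant $\varepsilon_0>0$ such that: (i) for every $P\ge0$, $\mathcal{B}\big(V e^{-P|\cdot|}\big)(x,t)\ge\eta(P)\Lambda(t)e^{-P|x|}$ on $Q_{\tau_0}$; (ii) for every $d\ge0$, $\mathcal{B}\big(V|\cdot|^d\big)(x,t)\ge\varepsilon_0\Lambda(t)|x|^{\sigma+d}$ on $Q_{\tau_0}$; moreover, for $d$ ranging in a bounded subset of $[0,\infty)$, $\varepsilon_0$ can be chosen independent of $d$.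
   Context: $J_n^+=\{0\}\cup[1,\infty)$ if $n=1$, $[0,\infty)$ if $n\ge2$. $\mathcal{B}$ acts in the $x$-variable: $\mathcal{B}\varphi=B*\varphi$ with $B=\mathcal{F}^{-1}((1+|\xi|^2)^{-1})$. $Q_{\tau_0}=\mathbb{R}^n\times[0,\tau_0)$. *)

(* Defs.v *)
From HB Require Import structures.
From mathcomp Require Import all_boot all_order all_algebra.
From mathcomp Require Import all_classical all_reals all_analysis.
Set Implicit Arguments. Unset Strict Implicit. Unset Printing Implicit Defensive.
Import Order.TTheory GRing.Theory Num.Theory.
Import numFieldNormedType.Exports.
Local Open Scope classical_set_scope.
Local Open Scope ring_scope.

Section Defs.
Variable R : realType.

Definition enorm n (x : 'rV[R]_n) : R := Num.sqrt (\sum_(i < n) x ord0 i ^+ 2).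

(* Lebesgue integral over R^n of an extended-real valued function,
   written as the iterated one-dimensional Lebesgue integral
   (for the nonnegative measurable integrands used here this is the
   Lebesgue integral w.r.t. n-dimensional Lebesgue measure, by Tonelli). *)
Fixpoint int_Rn (n : nat) : ('rV[R]_n -> \bar R) -> \bar R :=
  match n with
  | 0 => fun f => f 0
  | n'.+1 => fun f =>
      (\int[@lebesgue_measure R]_(a in [set: R])
         int_Rn (fun y : 'rV[R]_n' => f (row_mx (const_mx a : 'rV[R]_1) y)))%E
  end.

(* The Bessel kernel B = F^{-1}((1+|xi|^2)^{-1}), i.e. the kernel of
   (I - Laplacian)^{-1} on R^n, given by its standard subordination formula
   B(x) = int_0^oo (4 pi s)^{-n/2} e^{-s} e^{-|x|^2/(4s)} ds  (value +oo allowed). *)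
Definition bessel_kernel (n : nat) (x : 'rV[R]_n) : \bar R :=
  (\int[@lebesgue_measure R]_(s in [set s : R | (0 < s)%R])
     ((expR (- s - enorm x ^+ 2 / (4 * s)) / (Num.sqrt (4 * pi * s)) ^+ n)%R)%:E)%E.

Definition bessel_op (n : nat) (phi : 'rV[R]_n -> R) (x : 'rV[R]_n) : \bar R :=
  int_Rn (fun y => (bessel_kernel y * (phi (x - y))%:E)%E).

Definition Jn_plus (n : nat) (sigma : R) : Prop :=
  if n == 1%N then sigma = 0 \/ 1 <= sigma else 0 <= sigma.

Definition Qtau (n : nat) (tau0 : \bar R) : set ('rV[R]_n * R) :=
  [set p | 0 <= p.2 /\ (p.2%:E < tau0)%E].

End Defs.

(* Main.v *)
Set Warnings "-all".
Require Import Defs.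
From HB Require Import structures.
From mathcomp Require Import all_boot all_order all_algebra.
From mathcomp Require Import all_classical all_reals all_analysis.
From mathcomp Require Import ring lra.
Import Order.TTheory GRing.Theory Num.Theory.
Import numFieldNormedType.Exports.
Local Open Scope classical_set_scope.
Local Open Scope ring_scope.
Set Implicit Arguments. Unset Strict Implicit. Unset Printing Implicit Defensive.

Section S.
Variable R : realType.
Local Notation mu := (@lebesgue_measure R).

Lemma le_int_nm d (T : measurableType d) (m : {measure set T -> \bar R}) (D : set T) (f g : T -> \bar R) :
  (forall x, D x -> (0 <= f x)%E) -> (forall x, D x -> (f x <= g x)%E) ->
  (\int[m]_(x in D) f x <= \int[m]_(x in D) g x)%E.
Proof.
move=> f0 fg.
have g0 : forall x, D x -> (0 <= g x)%E by move=> x Dx; exact: le_trans (f0 _ Dx) (fg _ Dx).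
rewrite (ge0_integralE m f0) (ge0_integralE m g0).
apply: ereal_sup_le => _ [h hf <-]; exists h => //= x.
apply: le_trans (hf x) _.
rewrite /patch; case: ifP => // /set_mem Dx; exact: fg.
Qed.

Lemma int_lb (D : set R) (g : R -> \bar R) (a c : R) :
  0 <= c -> `[a, a + 1]%classic `<=` D ->
  (forall x, D x -> (0 <= g x)%E) -> (forall x, a <= x <= a + 1 -> (c%:E <= g x)%E) ->
  (c%:E <= \int[mu]_(x in D) g x)%E.
Proof.
move=> c0 AD g0 gc.
pose A : set R := `[a, a + 1]%classic.
have le1 : (\int[mu]_(x in A) g x <= \int[mu]_(x in D) g x)%E.
  rewrite [X in (X <= _)%E]integral_mkcond [X in (_ <= X)%E]integral_mkcond.
  apply: le_int_nm => x _; rewrite /patch; case: ifP => [/set_mem Ax|_] //.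
  - exact/g0/AD.
  - by rewrite ifT //; apply/mem_set/AD.
  - by case: ifP => // /set_mem /g0.
apply: le_trans le1.
apply: le_trans (_ : (\int[mu]_(x in A) (c%:E) <= _)%E).
  rewrite integral_cst //=; last exact: measurable_itv.
  have := lebesgue_measure_itv `[a, a + 1]; rewrite /= lte_fin ltrDl ltr01 => ->.
  by rewrite -EFinB addrAC subrr add0r mule1.
apply: le_int_nm => x; rewrite /A /= in_itv /= => /andP[h1 h2] //.
by apply: gc; rewrite h1 h2.
Qed.

Lemma int_Rn_ge0 n (f : 'rV[R]_n -> \bar R) : (forall y, (0 <= f y)%E) -> (0 <= int_Rn f)%E.
Proof.
elim: n f => [|n IH] f f0 /=; first exact: f0.
by apply: integral_ge0 => a _; apply: IH.
Qed.

Lemma int_Rn_lb n (lo : nat -> R) (c : R) (f : 'rV[R]_n -> \bar R) :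
  0 <= c -> (forall y, (0 <= f y)%E) ->
  (forall y : 'rV[R]_n, (forall i : 'I_n, lo i <= y ord0 i <= lo i + 1) -> (c%:E <= f y)%E) ->
  (c%:E <= int_Rn f)%E.
Proof.
elim: n lo f => [|n IH] lo f c0 f0 fc /=; first by apply: fc => -[].
refine (@int_lb setT _ (lo 0%N) c c0 _ _ _) => //.
- by move=> a _; apply: int_Rn_ge0 => y; apply: f0.
- move=> a ha; apply: (IH (fun k => lo k.+1)) => // y hy; apply: fc => i.
  case: (@splitP 1 n i) => [j eij|k eik].
  + have -> : i = lshift n j by apply: val_inj.
    rewrite (row_mxEl (const_mx a : 'rV[R]_1) y ord0 j) mxE.
    by case: j {eij} => -[|//] jlt /=.
  + have -> : i = rshift 1 k by apply: val_inj.
    by rewrite (row_mxEr (const_mx a : 'rV[R]_1) y ord0 k); apply: hy.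
Qed.

Lemma enorm_ge0 n (y : 'rV[R]_n) : 0 <= enorm y.
Proof. exact: sqrtr_ge0. Qed.

Lemma enorm_sqr n (y : 'rV[R]_n) : enorm y ^+ 2 = \sum_(i < n) y ord0 i ^+ 2.
Proof. by rewrite /enorm sqr_sqrtr // sumr_ge0 // => i _; exact: sqr_ge0. Qed.

Lemma kernel_lb n (y : 'rV[R]_n) (B : R) : 0 <= B -> enorm y ^+ 2 <= B ->
  ((expR (-2 - B / 4) / Num.sqrt (8 * pi) ^+ n)%:E <= bessel_kernel y)%E.
Proof.
move=> B0 yB; rewrite /bessel_kernel.
have e0 := sqr_ge0 (enorm y).
apply: (@int_lb _ _ 1).
- by apply: divr_ge0; [exact: expR_ge0 | apply: exprn_ge0; exact: sqrtr_ge0].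
- move=> s /=; rewrite in_itv /= => /andP[s1 _]; exact: lt_le_trans ltr01 s1.
- move=> s /= s0; rewrite lee_fin; apply: divr_ge0; [exact: expR_ge0 | apply: exprn_ge0; exact: sqrtr_ge0].
- move=> s /andP[s1 s2]; rewrite lee_fin.
  have s0 : 0 < s by exact: lt_le_trans ltr01 s1.
  have hpi := pi_gt0 R.
  apply: ler_pM.
  + exact: expR_ge0.
  + by rewrite invr_ge0; apply: exprn_ge0; exact: sqrtr_ge0.
  + rewrite ler_expR.
    have : enorm y ^+ 2 / (4 * s) <= B / 4.
      rewrite ler_pdivrMr; last by rewrite mulr_gt0.
      nra.
    lra.
  + have p1 : 0 < Num.sqrt (4 * pi * s) ^+ n.
      by apply: exprn_gt0; rewrite sqrtr_gt0 !mulr_gt0.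
    have p2 : 0 < Num.sqrt (8 * (pi : R)) ^+ n.
      by apply: exprn_gt0; rewrite sqrtr_gt0 !mulr_gt0.
    rewrite lef_pV2 ?posrE //.
    apply: lerXn2r; rewrite ?nnegrE ?sqrtr_ge0 //.
    rewrite ler_wsqrtr //; nra.
Qed.

Lemma t0_lb n (tau0 : \bar R) (Lambda : R -> R) (V : 'rV[R]_n -> R -> R) (z : 'rV[R]_n) (w : R) :
  (0 < tau0)%E -> 0 <= w ->
  {within [set t : R | 0 <= t /\ (t%:E < tau0)%E], continuous Lambda} ->
  {within (@Qtau R n tau0), continuous (fun p : 'rV[R]_n * R => V p.1 p.2)} ->
  (forall t, 0 < t -> (t%:E < tau0)%E -> Lambda t * w <= V z t) ->
  Lambda 0 * w <= V z 0.
Proof.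
move=> tau0_gt0 w0 hL hV hpos.
rewrite leNgt; apply/negP => hlt.
set D0 := Lambda 0 * w - V z 0.
have D0p : 0 < D0 by rewrite /D0 subr_gt0.
have e1p : 0 < D0 / 2 by rewrite divr_gt0.
have e2p : 0 < D0 / (2 * (w + 1)) by rewrite divr_gt0 // mulr_gt0 // ltr_wpDl.
have Q0 : Qtau tau0 (z, 0) by split => //=.
have S0 : [set t : R | 0 <= t /\ (t%:E < tau0)%E] 0 by split.
have hV1 := hV (z, 0).
have hL1 := hL 0.
have nV := cvgr_dist_lt _ _ hV1 _ e1p.
have nL := cvgr_dist_lt _ _ hL1 _ e2p.
have nV' : \forall p \near within (Qtau tau0) (nbhs ((z, 0) : 'rV[R]_n * R)),
    `|V z 0 - V p.1 p.2| < D0 / 2.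
  by rewrite nbhs_subspace_in //; exact: nV.
have nL' : \forall t \near within [set t : R | 0 <= t /\ (t%:E < tau0)%E] (nbhs (0 : R)),
    `|Lambda 0 - Lambda t| < D0 / (2 * (w + 1)).
  by rewrite nbhs_subspace_in //; exact: nL.
have hc : (fun t : R => (z, t)) @ (nbhs (0:R)) --> ((z, 0) : 'rV[R]_n * R).
  exact: (@cvg_pair _ _ _ (nbhs (0:R)) (nbhs z) (nbhs (0:R)) _ _ _ (fun=> z) id (cvg_cst z) cvg_id).
have nV2 : nbhs (0:R) (fun t => Qtau tau0 (z, t) -> `|V z 0 - V z t| < D0 / 2).
  exact: hc nV'.
have := filterI nV2 nL'.
rewrite nbhs_ballP => -[del del0 hdel].
have [t [t0 [tdel ttau]]] : exists t : R, 0 < t /\ t < del /\ (t%:E < tau0)%E.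
  case: tau0 {hL hV hpos Q0 S0 hV1 hL1 nV nL nV' nL' nV2 hdel} tau0_gt0 => [r|_|//].
  - rewrite lte_fin => r0; exists (Num.min (del / 2) (r / 2)); split; [|split].
    + by rewrite lt_min !divr_gt0.
    + by rewrite gt_min ltr_pdivrMr // ltr_pMr // ltr1n.
    + by rewrite lte_fin gt_min [X in _ || X]ltr_pdivrMr // ltr_pMr // ltr1n orbT.
  - exists (del / 2); split; first by rewrite divr_gt0.
    split; last exact: ltey.
    by rewrite ltr_pdivrMr // ltr_pMr // ltr1n.
have bt : ball (0:R) del t.
  by rewrite /ball /= sub0r normrN gtr0_norm.
have [hV3 hL3] := hdel t bt.
have tQ : Qtau tau0 (z, t) by split => //=; exact: ltW.
have tS : [set t | 0 <= t /\ (t%:E < tau0)%E] t by split => //; exact: ltW.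
have h1 := hV3 tQ; have h2 := hL3 tS.
have h3 := hpos t t0 ttau.
have h1' : V z t - V z 0 < D0 / 2 by rewrite distrC in h1; exact: le_lt_trans (ler_norm _) h1.
have h2' : Lambda 0 - Lambda t < D0 / (2 * (w + 1)) by exact: le_lt_trans (ler_norm _) h2.
set e2 := D0 / (2 * (w + 1)) in e2p h2'.
have e2w : e2 * w <= D0 / 2.
  rewrite /e2 mulrAC ler_pdivrMr; last by rewrite mulr_gt0 // ltr_wpDl.
  nra.
have h4 : (Lambda 0 - e2) * w <= Lambda t * w by apply: ler_wpM2r => //; lra.
rewrite /D0 in h1' e2w.
clear -h1' h3 h4 e2w.
nra.
Qed.


Lemma coord_le n (x : 'rV[R]_n) i : x ord0 i ^+ 2 <= enorm x ^+ 2.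
Proof.
rewrite enorm_sqr (bigD1 i) //= lerDl; apply: sumr_ge0 => j _; exact: sqr_ge0.
Qed.

Lemma coord_abs n (x : 'rV[R]_n) i : `|x ord0 i| <= enorm x.
Proof.
have := coord_le x i; rewrite -real_normK ?num_real // => h.
by rewrite -(ler_pXn2r (n:=2)) // ?nnegrE ?normr_ge0 ?enorm_ge0.
Qed.

Section Box.
Variables (n : nat) (x y : 'rV[R]_n).
Hypothesis hyb : forall i, -2 <= y ord0 i <= 2.

Lemma box_y : enorm y ^+ 2 <= 4 * n%:R.
Proof.
rewrite enorm_sqr.
apply: le_trans (_ : \sum_(i < n) (4 : R) <= _).
  apply: ler_sum => i _; have /andP[h1 h2] := hyb i; nra.
by rewrite sumr_const card_ord mulr_natr.

Qed.

Lemma box_tri : enorm (x - y) <= enorm x + (2 * n%:R + 2).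
Proof.
have hs : enorm (x - y) ^+ 2 <= enorm x ^+ 2 + 4 * n%:R * enorm x + 4 * n%:R.
  rewrite !enorm_sqr.
  apply: le_trans (_ : \sum_(i < n) (x ord0 i ^+ 2 + 4 * enorm x + 4) <= _).
    apply: ler_sum => i _; rewrite !mxE.
    have /andP[h1 h2] := hyb i; have h3 := coord_abs x i.
    have hy2 : y ord0 i ^+ 2 <= 4.
      have -> : (4 : R) = 2 ^+ 2 by rewrite expr2; lra.
      rewrite -real_normK ?num_real // ler_pXn2r ?nnegrE ?normr_ge0 //.
      by rewrite ler_norml; lra.
    have hxy : - (2 * x ord0 i * y ord0 i) <= 4 * enorm x.
      apply: le_trans (ler_norm _) _.
      rewrite normrN !normrM (ger0_norm (_ : (0:R) <= 2)); last lra.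
      have hyn : `|y ord0 i| <= 2 by rewrite ler_norml; lra.
      have := ler_pM (normr_ge0 (x ord0 i)) (normr_ge0 (y ord0 i)) h3 hyn.
      rewrite -mulrA; lra.
    have -> : (x ord0 i - y ord0 i) ^+ 2 = x ord0 i ^+ 2 - 2 * x ord0 i * y ord0 i + y ord0 i ^+ 2 by ring.
    lra.
  rewrite !big_split /= !sumr_const card_ord.
  rewrite -[4 * enorm x *+ n]mulr_natr; lra.
have h0 := enorm_ge0 (x - y); have h1 := enorm_ge0 x.
have hn : 0 <= n%:R :> R by exact: ler0n.
have hs2 : enorm (x - y) ^+ 2 <= (enorm x + (2 * n%:R + 2)) ^+ 2.
  apply: le_trans hs _.
  have -> : (enorm x + (2 * n%:R + 2)) ^+ 2 = enorm x ^+ 2 + (4 * n%:R + 4) * enorm x + (2 * n%:R + 2) ^+ 2 by ring.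
  have h5 : 4 * n%:R <= (2 * n%:R + 2) ^+ 2 :> R by have hnn := mulr_ge0 hn hn; rewrite expr2; lra.
  have h6 : 4 * n%:R * enorm x <= (4 * n%:R + 4) * enorm x.
    by apply: ler_wpM2r => //; lra.
  lra.
by rewrite -(ler_pXn2r (n:=2)) // nnegrE; lra.
Qed.

Lemma box_ge1 i0 : 1 <= (x ord0 i0 - y ord0 i0) ^+ 2 -> 1 <= enorm (x - y).
Proof.
move=> h; have := coord_le (x - y) i0; rewrite !mxE => h2.
have h0 := enorm_ge0 (x - y); nra.
Qed.

Lemma box_scale : 1 <= enorm (x - y) ->
  enorm x <= Num.sqrt (2 + 8 * n%:R) * enorm (x - y).
Proof.
move=> h1.
have hn : 0 <= n%:R :> R by exact: ler0n.
have hs : enorm x ^+ 2 <= (2 + 8 * n%:R) * enorm (x - y) ^+ 2.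
  have hy := box_y.
  have : enorm x ^+ 2 <= 2 * enorm (x - y) ^+ 2 + 2 * enorm y ^+ 2.
    rewrite !enorm_sqr !mulr_sumr -big_split /=.
    apply: ler_sum => i _; rewrite !mxE.
    have h := sqr_ge0 (x ord0 i - 2 * y ord0 i); rewrite !expr2 in h *; lra.
  have hB : 1 <= enorm (x - y) ^+ 2.
    by rewrite expr2; have := ler_pM ler01 ler01 h1 h1; rewrite mulr1.
  have hB' : 0 <= enorm (x - y) ^+ 2 - 1 by lra.
  have hp := mulr_ge0 hn hB'.
  lra.
have hC : 0 <= Num.sqrt (2 + 8 * (n%:R : R)) by exact: sqrtr_ge0.
have hC2 : Num.sqrt (2 + 8 * (n%:R : R)) ^+ 2 = 2 + 8 * (n%:R : R) by rewrite sqr_sqrtr //; lra.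
rewrite -(ler_pXn2r (n:=2)) // ?nnegrE ?enorm_ge0 ?mulr_ge0 ?enorm_ge0 //.
by rewrite exprMn hC2.
Qed.
End Box.
End S.


Theorem mainTheorem14 (R : realType) (n : nat) (tau0 : \bar R) (sigma : R)
  (Lambda : R -> R) (V : 'rV[R]_n -> R -> R) :
  (1 <= n)%N ->
  (0 < tau0)%E ->
  Jn_plus n sigma ->
  {within [set t : R | 0 <= t /\ (t%:E < tau0)%E], continuous Lambda} ->
  (forall t : R, 0 <= t -> (t%:E < tau0)%E -> 0 < Lambda t) ->
  {within (@Qtau R n tau0), continuous (fun p : 'rV[R]_n * R => V p.1 p.2)} ->
  (forall x t, (@Qtau R n tau0) (x, t) -> 0 <= V x t) ->
  (forall x t, 1 <= enorm x -> 0 < t -> (t%:E < tau0)%E ->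
      Lambda t * enorm x `^ sigma <= V x t) ->
  exists eta : R -> R,
    (forall P, 0 < eta P) /\
    {homo eta : P Q / P <= Q >-> Q <= P} /\
    (forall P : R, 0 <= P -> forall x t, (@Qtau R n tau0) (x, t) ->
       ((eta P * Lambda t * expR (- P * enorm x))%:E <=
        bessel_op (fun y => (V y t * expR (- P * enorm y))%R) x)%E) /\
    (forall M : R, 0 <= M -> exists eps0 : R, 0 < eps0 /\
       forall d : R, 0 <= d -> d <= M -> forall x t, (@Qtau R n tau0) (x, t) ->
         ((eps0 * Lambda t * enorm x `^ (sigma + d))%:E <=
          bessel_op (fun y => (V y t * enorm y `^ d)%R) x)%E).
Proof.
case: n V => [//|n] V _ tau0_gt0 hJ hL hLpos hV hV0 hlb.
set N : R := (n.+1)%:R.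
have N0 : 0 <= N by exact: ler0n.
have sig0 : 0 <= sigma.
  by move: hJ; rewrite /Jn_plus; case: ifP => _ // [->|]; lra.
have Vlb : forall z t, Qtau tau0 (z, t) -> 1 <= enorm z ->
    Lambda t * enorm z `^ sigma <= V z t.
  move=> z t [/= t0 tt] hz; case: (eqVneq t 0) => [->|tn0].
    apply: (t0_lb tau0_gt0 (powR_ge0 _ _) hL hV) => s s0 st; exact: hlb.
  by apply: hlb => //; rewrite lt_neqAle eq_sym tn0.
pose kc : R := expR (-2 - 4 * N / 4) / Num.sqrt (8 * pi) ^+ n.+1.
have kc0 : 0 < kc.
  by rewrite divr_gt0 ?expR_gt0 // exprn_gt0 // sqrtr_gt0 mulr_gt0 // pi_gt0.
pose K : R := 2 * N + 2.
have K0 : 0 <= K by rewrite /K; lra.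
pose lo (x : 'rV[R]_n.+1) (k : nat) : R :=
  match k with 0 => if 0 <= x ord0 ord0 then -2 else 1 | _ => 0 end.
have boxP : forall x y : 'rV[R]_n.+1,
    (forall i : 'I_n.+1, lo x i <= y ord0 i <= lo x i + 1) ->
    (forall i, -2 <= y ord0 i <= 2) /\ 1 <= (x ord0 ord0 - y ord0 ord0) ^+ 2.
  move=> x y hy; split.
    move=> i; have := hy i; rewrite /lo; case: (nat_of_ord i) => [|k].
      by case: ifP => _ /andP[h1 h2]; apply/andP; split; lra.
    by move=> /andP[h1 h2]; apply/andP; split; lra.
  have := hy ord0; rewrite /lo /=; case: ifP => hx /andP[h1 h2].
    nra.
  move: hx => /negbT; rewrite -ltNge => hx; nra.
have kerge0 : forall y : 'rV[R]_n.+1, (0 <= bessel_kernel y)%E.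
  move=> y; apply: integral_ge0 => s /= s0; rewrite lee_fin.
  by apply: divr_ge0; [exact: expR_ge0 | apply: exprn_ge0; exact: sqrtr_ge0].
have kerlb : forall y : 'rV[R]_n.+1, (forall i, -2 <= y ord0 i <= 2) ->
    (kc%:E <= bessel_kernel y)%E.
  move=> y hyb; apply: kernel_lb; first lra.
  exact: box_y.
exists (fun P => kc * expR (- P * K)).
split; [|split; [|split]].
- by move=> P; rewrite mulr_gt0 // expR_gt0.
- move=> P Q PQ /=; rewrite ler_pM2l // ler_expR.
  have := ler_wpM2r K0 PQ; lra.
- move=> P P0 x t hQ; rewrite /bessel_op.
  have Lt := hLpos t hQ.1 hQ.2.
  apply: (int_Rn_lb (lo := lo x)).
  + by rewrite !mulr_ge0 ?expR_ge0 // ltW.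
  + move=> y; apply: mule_ge0 => //; rewrite lee_fin mulr_ge0 ?expR_ge0 //.
    by apply: hV0; exact: hQ.
  + move=> y hy; have [hyb hx0] := boxP x y hy.
    have e1 : 1 <= enorm (x - y) by apply: (box_ge1 (i0 := ord0)); rewrite ?mxE.
    have -> : (kc * expR (- P * K) * Lambda t * expR (- P * enorm x))%:E =
        (kc%:E * (Lambda t * (expR (- P * K) * expR (- P * enorm x)))%:E)%E.
      by rewrite -EFinM; congr EFin; ring.
    apply: lee_pmul => //.
    * by rewrite lee_fin; exact: ltW.
    * by rewrite lee_fin !mulr_ge0 ?expR_ge0 // ltW.
    * exact: kerlb.
    rewrite lee_fin.
    have hv := Vlb (x - y) t hQ e1.
    have hp : 1 <= enorm (x - y) `^ sigma.
      by have := ler_powR e1 sig0; rewrite powRr0.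
    have he : expR (- P * K) * expR (- P * enorm x) <= expR (- P * enorm (x - y)).
      rewrite -expRD ler_expR.
      have := box_tri x hyb; rewrite -/N -/K => ht.
      have := ler_wpM2l P0 ht; lra.
    apply: le_trans (_ : Lambda t * enorm (x - y) `^ sigma * expR (- P * enorm (x - y)) <= _).
      rewrite -mulrA; apply: ler_pM; rewrite ?mulr_ge0 ?expR_ge0 //; try exact: ltW.
      apply: le_trans he _; rewrite -{1}(mul1r (expR _)).
      by apply: ler_wpM2r => //; exact: expR_ge0.
    by apply: ler_wpM2r => //; exact: expR_ge0.
- move=> M M0.
  set C := Num.sqrt (2 + 8 * N).
  have C1 : 1 <= C.
    have h : (1:R) <= 2 + 8 * N by lra.
    by have := ler_wsqrtr h; rewrite sqrtr1.
  have C0 : 0 < C by lra.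
  have CM0 : 0 < C `^ (sigma + M) by exact: powR_gt0.
  exists (kc / C `^ (sigma + M)); split; first by rewrite divr_gt0.
  move=> d d0 dM x t hQ; rewrite /bessel_op.
  have Lt := hLpos t hQ.1 hQ.2.
  apply: (int_Rn_lb (lo := lo x)).
  + by apply: mulr_ge0; [apply: mulr_ge0; [apply: divr_ge0; exact: ltW|exact: ltW]|exact: powR_ge0].
  + move=> y; apply: mule_ge0 => //; rewrite lee_fin mulr_ge0 ?powR_ge0 //.
    by apply: hV0; exact: hQ.
  + move=> y hy; have [hyb hx0] := boxP x y hy.
    have e1 : 1 <= enorm (x - y) by apply: (box_ge1 (i0 := ord0)); rewrite ?mxE.
    have hsc := box_scale hyb e1; rewrite -/N -/C in hsc.
    have -> : (kc / C `^ (sigma + M) * Lambda t * enorm x `^ (sigma + d))%:E =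
        (kc%:E * (Lambda t * (enorm x `^ (sigma + d) / C `^ (sigma + M)))%:E)%E.
      by rewrite -EFinM; congr EFin; ring.
    apply: lee_pmul => //.
    * by rewrite lee_fin; exact: ltW.
    * by rewrite lee_fin !mulr_ge0 ?powR_ge0 ?invr_ge0 // ltW.
    * exact: kerlb.
    rewrite lee_fin.
    have hv := Vlb (x - y) t hQ e1.
    have en0 := enorm_ge0 (x - y).
    have h1 : enorm x `^ (sigma + d) <= C `^ (sigma + d) * enorm (x - y) `^ (sigma + d).
      rewrite -powRM //; last exact: ltW.
      by apply: ge0_ler_powR; rewrite ?nnegrE ?enorm_ge0 ?mulr_ge0 //; [lra|exact: ltW].
    have h2 : C `^ (sigma + d) <= C `^ (sigma + M) by apply: ler_powR => //; lra.
    have h3 : enorm x `^ (sigma + d) / C `^ (sigma + M) <= enorm (x - y) `^ (sigma + d).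
      rewrite ler_pdivrMr //; apply: le_trans h1 _; rewrite mulrC.
      by apply: ler_wpM2l => //; exact: powR_ge0.
    have h4 : enorm (x - y) `^ (sigma + d) = enorm (x - y) `^ sigma * enorm (x - y) `^ d.
      by rewrite powRD //; apply/implyP => _; rewrite gt_eqF //; exact: lt_le_trans ltr01 e1.
    apply: le_trans (_ : Lambda t * enorm (x - y) `^ (sigma + d) <= _).
      by apply: ler_wpM2l => //; exact: ltW.
    rewrite h4 mulrA.
    by apply: ler_wpM2r => //; exact: powR_ge0.
Qed.
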